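(* On the vector space $\mathbb{R}^{(\mathbb{N})}$, let $\boldsymbol{\mu}$ be the finest vector topology and $\boldsymbol{\nu}$ the finest locally convex vector topology in which $e_n\to\mathbf{0}$. Then: (1) the family $\mathcal{N}_{\mathbf{s}}$ of all sets $U(\mathrm{S})=\bigcup_{k\in\omega}\big(S(\mathbf{a}_0)+\cdots+S(\mathbf{a}_k)\big)$, where $\mathrm{S}=\{S(\mathbf{a}_k)\}_{k\in\omega}$ ranges over all sequences with $\mathbf{a}_k\in\mathcal{A}$, is a base at $\mathbf{0}$ for $\boldsymbol{\mu}$; (2) the family $\{\mathrm{conv}(V): V\in\mathcal{N}_{\mathbf{s}}\}$ is a base at $\mathbf{0}$ for $\boldsymbol{\nu}$; (3) for every $\boldsymbol{\nu}$-neighborhood $U$ of $\mathbf{0}$, every $t\in\mathbb{N}$ and every $a>0$ there is $q\in\mathbb{N}$ such that every vector $v=\lambda_1 a e_{m_1}+\cdots+\lambda_t a e_{m_t}$ with $q<m_1<\cdots<m_t$ and $\lambda_1,\dots,\lambda_t\in[-1,1]$ belongs to $U$.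
   Context: $\mathbb{N}=\{1,2,\dots\}$, $\omega=\{0\}\cup\mathbb{N}$. $\mathbb{R}^{(\mathbb{N})}$ is the space of finitely supported real sequences, $\mathbf{0}$ its zero vector, and $e_n$ the sequence with $1$ in position $n$ and $0$ elsewhere. (With $\mathbf{s}=\{1/n\}_{n\in\mathbb{N}}\cup\{0\}$ and base point $0$, $(\mathbb{R}^{(\mathbb{N})},\boldsymbol{\nu})$ is the Graev free locally convex space $L_G(\mathbf{s})$, the point $1/n$ corresponding to $e_n$.) $\mathcal{A}$ is the family of all sequences $\mathbf{a}=(a_n)_{n\in\mathbb{N}}$ of positive reals with $\lim_n a_n=\infty$. For $\mathbf{a}\in\mathcal{A}$, $S(\mathbf{a})=\bigcup_{n\in\mathbb{N}}\{t e_n : |t|<a_n\}$. $\mathrm{conv}(A)$ denotes the convex hull of $A$. *)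

(* Defs.v *)
From Stdlib Require Import Reals List.
Open Scope R_scope.

(* Vectors: real sequences indexed by nat; coordinate 0 is unused
   (index set is N = {1,2,...}). *)
Definition vec := nat -> R.

(* The carrier R^(N): finitely supported sequences (with x 0 = 0). *)
Definition fsupp (x : vec) : Prop :=
  x O = 0 /\ exists N : nat, forall n : nat, (N < n)%nat -> x n = 0.

Definition vzero : vec := fun _ => 0.
Definition vadd (x y : vec) : vec := fun n => x n + y n.
Definition vscal (t : R) (x : vec) : vec := fun n => t * x n.
Definition e (n : nat) : vec := fun k => if Nat.eqb k n then 1 else 0.

Definition topology (tau : (vec -> Prop) -> Prop) : Prop :=
  (forall U, tau U -> forall x, U x -> fsupp x) /\
  tau (fun _ => False) /\
  tau fsupp /\
  (forall F : (vec -> Prop) -> Prop,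
      (forall U, F U -> tau U) -> tau (fun x => exists U, F U /\ U x)) /\
  (forall U V, tau U -> tau V -> tau (fun x => U x /\ V x)).

Definition nbhd (tau : (vec -> Prop) -> Prop) (U : vec -> Prop) (x : vec) : Prop :=
  exists W, tau W /\ W x /\ (forall y, W y -> U y).

Definition vector_topology (tau : (vec -> Prop) -> Prop) : Prop :=
  topology tau /\
  (forall x y, fsupp x -> fsupp y -> forall W, nbhd tau W (vadd x y) ->
     exists U V, nbhd tau U x /\ nbhd tau V y /\
       (forall u v, U u -> V v -> W (vadd u v))) /\
  (forall (t : R) x, fsupp x -> forall W, nbhd tau W (vscal t x) ->
     exists (d : R) U, 0 < d /\ nbhd tau U x /\
       (forall s u, Rabs (s - t) < d -> U u -> W (vscal s u))).

Definition convex (A : vec -> Prop) : Prop :=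
  forall x y (t : R), A x -> A y -> 0 <= t <= 1 ->
    A (vadd (vscal t x) (vscal (1 - t) y)).

Definition locally_convex (tau : (vec -> Prop) -> Prop) : Prop :=
  vector_topology tau /\
  (forall U, nbhd tau U vzero ->
     exists V, nbhd tau V vzero /\ convex V /\ (forall x, V x -> U x)).

Definition e_to_zero (tau : (vec -> Prop) -> Prop) : Prop :=
  forall U, nbhd tau U vzero -> exists N : nat, forall n : nat, (N < n)%nat -> U (e n).

Definition is_mu (mu : (vec -> Prop) -> Prop) : Prop :=
  vector_topology mu /\ e_to_zero mu /\
  (forall tau, vector_topology tau -> e_to_zero tau -> forall U, tau U -> mu U).

Definition is_nu (nu : (vec -> Prop) -> Prop) : Prop :=
  locally_convex nu /\ e_to_zero nu /\
  (forall tau, locally_convex tau -> e_to_zero tau -> forall U, tau U -> nu U).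

(* The family A: positive sequences (a_n)_{n in N} tending to infinity
   (the value a 0 is irrelevant). *)
Definition in_A (a : nat -> R) : Prop :=
  (forall n : nat, (1 <= n)%nat -> 0 < a n) /\ cv_infty a.

Definition Sa (a : nat -> R) : vec -> Prop :=
  fun x => exists (n : nat) (t : R), (1 <= n)%nat /\ Rabs t < a n /\ x = vscal t (e n).

Fixpoint Ssum (as_ : nat -> nat -> R) (k : nat) : vec -> Prop :=
  match k with
  | O => Sa (as_ O)
  | S k' => fun x => exists y z, Ssum as_ k' y /\ Sa (as_ (S k')) z /\ x = vadd y z
  end.

Definition Useq (as_ : nat -> nat -> R) : vec -> Prop :=
  fun x => exists k : nat, Ssum as_ k x.

Definition Ns (V : vec -> Prop) : Prop :=
  exists as_ : nat -> nat -> R, (forall k, in_A (as_ k)) /\ (forall x, V x <-> Useq as_ x).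

Definition wsum (l : list (R * vec)) : vec :=
  fold_right (fun p acc => vadd (vscal (fst p) (snd p)) acc) vzero l.
Definition weights (l : list (R * vec)) : R :=
  fold_right (fun p acc => fst p + acc) 0 l.
Definition conv (A : vec -> Prop) : vec -> Prop :=
  fun x => exists l : list (R * vec),
    Forall (fun p => 0 <= fst p /\ A (snd p)) l /\ weights l = 1 /\ x = wsum l.

Definition base_at0 (tau : (vec -> Prop) -> Prop) (B : (vec -> Prop) -> Prop) : Prop :=
  (forall V, B V -> nbhd tau V vzero) /\
  (forall W, nbhd tau W vzero -> exists V, B V /\ (forall x, V x -> W x)).

Fixpoint lincomb (lam : nat -> R) (a : R) (m : nat -> nat) (t : nat) : vec :=
  match t with
  | O => vzero
  | S t' => vadd (lincomb lam a m t') (vscal (lam (S t') * a) (e (m (S t'))))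
  end.

(* Main.v *)
Require Import Defs.
From Stdlib Require Import Reals List Lra Lia FunctionalExtensionality ClassicalEpsilon Classical.
Open Scope R_scope.

Ltac vext := apply functional_extensionality; intro; unfold vadd, vscal, vzero; try ring.

Lemma vadd_0_r x : vadd x vzero = x.
Proof. vext. Qed.
Lemma vadd_0_l x : vadd vzero x = x.
Proof. vext. Qed.
Lemma vadd_assoc x y z : vadd (vadd x y) z = vadd x (vadd y z).
Proof. vext. Qed.
Lemma vscal_vzero t : vscal t vzero = vzero.
Proof. vext. Qed.
Lemma vscal_0 x : vscal 0 x = vzero.
Proof. vext. Qed.
Lemma vscal_1 x : vscal 1 x = x.
Proof. vext. Qed.

Lemma fsupp_vzero : fsupp vzero.
Proof. split; [reflexivity| exists O; intros; reflexivity]. Qed.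

Lemma fsupp_vadd x y : fsupp x -> fsupp y -> fsupp (vadd x y).
Proof.
  intros [h0 [N1 h1]] [g0 [N2 h2]]; split; unfold vadd.
  - rewrite h0, g0; ring.
  - exists (Nat.max N1 N2); intros n hn. rewrite h1, h2 by lia. ring.
Qed.

Lemma fsupp_vscal t x : fsupp x -> fsupp (vscal t x).
Proof.
  intros [h0 [N1 h1]]; split; unfold vscal.
  - rewrite h0; ring.
  - exists N1; intros n hn. rewrite h1 by lia. ring.
Qed.

Lemma fsupp_e n : (1 <= n)%nat -> fsupp (e n).
Proof.
  intros hn; split; unfold e.
  - destruct n; [lia| reflexivity].
  - exists n; intros k hk. destruct (Nat.eqb_spec k n); [lia| reflexivity].
Qed.

Definition good (as_ : nat -> nat -> R) := forall k, in_A (as_ k).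

Lemma good_exists : exists as_, good as_.
Proof.
  exists (fun _ n => INR n). intro k; split.
  - intros n hn. apply lt_0_INR; lia.
  - intro M. destruct (INR_unbounded M) as [N HN]. exists N. intros n hn.
    apply le_INR in hn. lra.
Qed.

Lemma in_A_min a b : in_A a -> in_A b -> in_A (fun n => Rmin (a n) (b n)).
Proof.
  intros [pa ca] [pb cb]; split.
  - intros n hn. apply Rmin_glb_lt; auto.
  - intro M. destruct (ca M) as [N1 h1]; destruct (cb M) as [N2 h2].
    exists (Nat.max N1 N2). intros n hn. apply Rmin_glb_lt; [apply h1|apply h2]; lia.
Qed.

Lemma in_A_div a M : in_A a -> 0 < M -> in_A (fun n => a n / M).
Proof.
  intros [pa ca] hM; split.
  - intros n hn. apply Rdiv_lt_0_compat; auto.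
  - intro K. destruct (ca (K * M)) as [N h]. exists N. intros n hn.
    specialize (h n hn). apply Rmult_lt_reg_r with M; auto.
    unfold Rdiv. rewrite Rmult_assoc, Rinv_l by lra. lra.
Qed.

Lemma Sa_0 a : in_A a -> Sa a vzero.
Proof.
  intros [pa _]. exists 1%nat, 0. split; [lia|split].
  - rewrite Rabs_R0. apply pa; lia.
  - rewrite vscal_0. reflexivity.
Qed.

Lemma Sa_fsupp a x : Sa a x -> fsupp x.
Proof. intros [n [t [hn [_ ->]]]]. apply fsupp_vscal, fsupp_e; auto. Qed.

Lemma Ssum_fsupp as_ k x : Ssum as_ k x -> fsupp x.
Proof.
  revert x; induction k; simpl; intros x H.
  - eapply Sa_fsupp; eauto.
  - destruct H as [y [z [hy [hz ->]]]]. apply fsupp_vadd; [apply IHk; auto| eapply Sa_fsupp; eauto].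
Qed.

Lemma Useq_fsupp as_ x : Useq as_ x -> fsupp x.
Proof. intros [k H]; eapply Ssum_fsupp; eauto. Qed.

Lemma Useq_0 as_ : good as_ -> Useq as_ vzero.
Proof. intros g. exists O. simpl. apply Sa_0, g. Qed.

Lemma Sa_scale a b c z : in_A a -> (forall n, (1 <= n)%nat -> Rabs c * b n <= a n) ->
  Sa b z -> Sa a (vscal c z).
Proof.
  intros [pa _] hb [n [t [hn [ht ->]]]]. exists n, (c * t). split; auto. split.
  - rewrite Rabs_mult. destruct (Req_dec c 0) as [->|hc].
    + rewrite Rabs_R0, Rmult_0_l. apply pa; auto.
    + apply Rlt_le_trans with (Rabs c * b n); [|apply hb; auto].
      apply Rmult_lt_compat_l; auto. apply Rabs_pos_lt; auto.
  - vext.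
Qed.

Lemma Ssum_scale as_ bs c : good as_ ->
  (forall i n, (1 <= n)%nat -> Rabs c * bs i n <= as_ i n) ->
  forall k z, Ssum bs k z -> Ssum as_ k (vscal c z).
Proof.
  intros g hb; induction k; simpl; intros z H.
  - eapply Sa_scale; eauto.
  - destruct H as [y [w [hy [hw ->]]]]. exists (vscal c y), (vscal c w).
    split; [auto| split; [eapply Sa_scale; eauto| vext]].
Qed.

Lemma Useq_scale as_ bs c : good as_ ->
  (forall i n, (1 <= n)%nat -> Rabs c * bs i n <= as_ i n) ->
  forall z, Useq bs z -> Useq as_ (vscal c z).
Proof. intros g hb z [k H]. exists k. eapply Ssum_scale; eauto. Qed.

Lemma Useq_mono as_ bs : good as_ ->
  (forall i n, (1 <= n)%nat -> bs i n <= as_ i n) ->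
  forall z, Useq bs z -> Useq as_ z.
Proof.
  intros g hb z H. rewrite <- (vscal_1 z). eapply Useq_scale; eauto.
  intros. rewrite Rabs_R1, Rmult_1_l. auto.
Qed.

Lemma Sa_mono a b z : (forall n, (1 <= n)%nat -> b n <= a n) -> Sa b z -> Sa a z.
Proof.
  intros hb [n [t [hn [ht ->]]]]. exists n, t. split; auto. split; auto.
  apply Rlt_le_trans with (b n); auto.
Qed.

Lemma Ssum_extend as_ : good as_ -> forall k j y, Ssum as_ k y -> Ssum as_ (k + j) y.
Proof.
  intros g k j; induction j; intros y H.
  - rewrite Nat.add_0_r; auto.
  - rewrite Nat.add_succ_r. simpl. exists y, vzero. split; auto. split.
    + apply Sa_0, g.
    + rewrite vadd_0_r; auto.
Qed.

Lemma Ssum_half as_ bs : good as_ ->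
  (forall i n, (1 <= n)%nat -> bs i n <= as_ (2 * i)%nat n /\ bs i n <= as_ (2 * i + 1)%nat n) ->
  forall K y z, Ssum bs K y -> Ssum bs K z -> Ssum as_ (2 * K + 1) (vadd y z).
Proof.
  intros g hb; induction K; intros y z hy hz.
  - simpl. exists y, z. split; [|split; [|reflexivity]].
    + eapply Sa_mono; [|exact hy]. intros n hn; apply (hb O n hn).
    + eapply Sa_mono; [|exact hz]. intros n hn; apply (hb O n hn).
  - destruct hy as [y1 [s [hy1 [hs ->]]]]. destruct hz as [z1 [r [hz1 [hr ->]]]].
    replace (2 * S K + 1)%nat with (S (S (2 * K + 1))) by lia.
    exists (vadd (vadd y1 z1) s), r. split; [|split].
    + exists (vadd y1 z1), s. split; [auto| split; [|reflexivity]].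
      eapply Sa_mono; [|exact hs]. intros n hn.
      replace (S (2 * K + 1)) with (2 * S K)%nat by lia. apply (hb (S K) n hn).
    + eapply Sa_mono; [|exact hr]. intros n hn.
      replace (S (S (2 * K + 1))) with (2 * S K + 1)%nat by lia. apply (hb (S K) n hn).
    + vext.
Qed.

Lemma Useq_half as_ : good as_ -> exists bs, good bs /\
  forall y z, Useq bs y -> Useq bs z -> Useq as_ (vadd y z).
Proof.
  intros g. exists (fun i n => Rmin (as_ (2 * i)%nat n) (as_ (2 * i + 1)%nat n)). split.
  - intro k. apply in_A_min; apply g.
  - intros y z [k1 h1] [k2 h2]. exists (2 * Nat.max k1 k2 + 1)%nat.
    apply (Ssum_half as_ (fun i n => Rmin (as_ (2 * i)%nat n) (as_ (2 * i + 1)%nat n))); auto.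
    + intros; split; [apply Rmin_l| apply Rmin_r].
    + replace (Nat.max k1 k2) with (k1 + (Nat.max k1 k2 - k1))%nat by lia.
      apply Ssum_extend; auto. intro; apply in_A_min; apply g.
    + replace (Nat.max k1 k2) with (k2 + (Nat.max k1 k2 - k2))%nat by lia.
      apply Ssum_extend; auto. intro; apply in_A_min; apply g.
Qed.

Lemma Useq_absorb as_ : good as_ -> forall x, fsupp x ->
  exists d, 0 < d /\ forall r, Rabs r < d -> Useq as_ (vscal r x).
Proof.
  intros g x [h0 [N hN]].
  assert (forall N x, x O = 0 -> (forall n, (N < n)%nat -> x n = 0) ->
    exists d, 0 < d /\ forall r, Rabs r < d -> Ssum as_ N (vscal r x)) as key.
  { clear x h0 N hN. induction N; intros x h0 hN.
    - exists 1. split; [lra|]. intros r _. simpl.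
      replace (vscal r x) with vzero. { apply Sa_0, g. }
      vext. destruct x0; [rewrite h0| rewrite hN by lia]; ring.
    - set (x' := fun n => if Nat.eqb n (S N) then 0 else x n).
      destruct (IHN x') as [d' [hd' Hd']].
      { unfold x'. simpl. exact h0. }
      { intros n hn. unfold x'. destruct (Nat.eqb_spec n (S N)); auto. apply hN; lia. }
      set (c := x (S N)). set (A := as_ (S N) (S N)).
      assert (hA : 0 < A) by (apply (g (S N)); lia).
      assert (hc : 0 < Rabs c + 1) by (pose proof (Rabs_pos c); lra).
      exists (Rmin d' (A / (Rabs c + 1))). split.
      { apply Rmin_glb_lt; auto. apply Rdiv_lt_0_compat; auto. }
      intros r hr. simpl. exists (vscal r x'), (vscal (r * c) (e (S N))). split.
      { apply Hd'. apply Rlt_le_trans with (1 := hr). apply Rmin_l. }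
      split.
      + exists (S N), (r * c). split; [lia|split; [|reflexivity]].
        assert (Rabs r < A / (Rabs c + 1)) by (apply Rlt_le_trans with (1 := hr); apply Rmin_r).
        rewrite Rabs_mult. apply Rmult_lt_compat_r with (r := Rabs c + 1) in H; auto.
        unfold Rdiv in H. rewrite Rmult_assoc, Rinv_l in H by lra.
        assert (Rabs r * Rabs c <= Rabs r * (Rabs c + 1)) by (apply Rmult_le_compat_l; [apply Rabs_pos| lra]).
        unfold A in *; lra.
      + vext. unfold x', e, c. destruct (Nat.eqb_spec x0 (S N)); [subst; ring| ring]. }
  destruct (key N x h0 hN) as [d [hd Hd]]. exists d; split; auto.
  intros r hr; exists N; auto.
Qed.

Lemma Useq_e as_ : good as_ -> exists N, forall n, (N < n)%nat -> Useq as_ (e n).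
Proof.
  intros g. destruct (g O) as [_ c]. destruct (c 1) as [N hN]. exists N. intros n hn.
  exists O. simpl. exists n, 1. split; [lia|split].
  - rewrite Rabs_R1. apply hN; lia.
  - rewrite vscal_1; auto.
Qed.

Lemma wsum_app l1 l2 : wsum (l1 ++ l2) = vadd (wsum l1) (wsum l2).
Proof.
  induction l1; simpl.
  - rewrite vadd_0_l; auto.
  - rewrite IHl1, vadd_assoc; auto.
Qed.
Lemma weights_app l1 l2 : weights (l1 ++ l2) = weights l1 + weights l2.
Proof. induction l1; simpl; [ring| rewrite IHl1; ring]. Qed.

Definition scl (c : R) (l : list (R * vec)) := map (fun p => (c * fst p, snd p)) l.
Definition mapv (c : R) (l : list (R * vec)) := map (fun p => (fst p, vscal c (snd p))) l.

Lemma wsum_scl c l : wsum (scl c l) = vscal c (wsum l).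
Proof. induction l; simpl; [rewrite vscal_vzero; auto| rewrite IHl; vext]. Qed.
Lemma weights_scl c l : weights (scl c l) = c * weights l.
Proof. induction l; simpl; [ring| rewrite IHl; ring]. Qed.
Lemma wsum_mapv c l : wsum (mapv c l) = vscal c (wsum l).
Proof. induction l; simpl; [rewrite vscal_vzero; auto| rewrite IHl; vext]. Qed.
Lemma weights_mapv c l : weights (mapv c l) = weights l.
Proof. induction l; simpl; [ring| rewrite IHl; ring]. Qed.

Lemma conv_mono (A B : vec -> Prop) x : (forall v, A v -> B v) -> conv A x -> conv B x.
Proof.
  intros hAB [l [hf [hw ->]]]. exists l. split; auto.
  eapply Forall_impl; [|exact hf]. intros p [h1 h2]; auto.
Qed.

Lemma conv_scale (A B : vec -> Prop) c x : (forall v, A v -> B (vscal c v)) -> conv A x -> conv B (vscal c x).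
Proof.
  intros hAB [l [hf [hw ->]]]. exists (mapv c l). split; [|split].
  - unfold mapv. apply Forall_map. eapply Forall_impl; [|exact hf]. simpl. intros p [h1 h2]; auto.
  - rewrite weights_mapv; auto.
  - rewrite wsum_mapv; auto.
Qed.

Lemma conv_incl (A : vec -> Prop) x : A x -> conv A x.
Proof.
  intros h. exists ((1, x) :: nil). split; [constructor; [simpl; split; [lra| auto]| constructor]|].
  simpl. split; [ring|]. rewrite vadd_0_r, vscal_1; auto.
Qed.

Lemma conv_convex (A : vec -> Prop) : convex (conv A).
Proof.
  intros x y t [l1 [h1 [w1 ->]]] [l2 [h2 [w2 ->]]] ht.
  exists (scl t l1 ++ scl (1 - t) l2). split; [|split].
  - apply Forall_app; split; unfold scl; apply Forall_map.
    + eapply Forall_impl; [|exact h1]. simpl; intros p [a b]; split; auto. apply Rmult_le_pos; lra.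
    + eapply Forall_impl; [|exact h2]. simpl; intros p [a b]; split; auto. apply Rmult_le_pos; lra.
  - rewrite weights_app, !weights_scl, w1, w2; ring.
  - rewrite wsum_app, !wsum_scl; auto.
Qed.

Lemma wsum_fsupp (A : vec -> Prop) l : (forall v, A v -> fsupp v) ->
  Forall (fun p => 0 <= fst p /\ A (snd p)) l -> fsupp (wsum l).
Proof.
  intros hA; induction l; simpl; intros hf.
  - apply fsupp_vzero.
  - inversion hf; subst. destruct H1. apply fsupp_vadd; [apply fsupp_vscal; auto| auto].
Qed.

Lemma conv_fsupp (A : vec -> Prop) x : (forall v, A v -> fsupp v) -> conv A x -> fsupp x.
Proof. intros hA [l [hf [_ ->]]]. eapply wsum_fsupp; eauto. Qed.

Lemma weights_nonneg (A : vec -> Prop) l : Forall (fun p => 0 <= fst p /\ A (snd p)) l -> 0 <= weights l.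
Proof. induction l; simpl; intros hf; [lra|]. inversion hf; subst. destruct H1. specialize (IHl H2). lra. Qed.

Lemma weights0 (A : vec -> Prop) l : Forall (fun p => 0 <= fst p /\ A (snd p)) l -> weights l = 0 -> wsum l = vzero.
Proof.
  induction l; simpl; intros hf hw; auto. inversion hf; subst. destruct H1.
  pose proof (weights_nonneg _ _ H2).
  assert (fst a = 0) by lra. assert (weights l = 0) by lra.
  rewrite IHl by auto. rewrite H3. vext.
Qed.

Lemma convex_conv_sub (A C : vec -> Prop) x : convex C -> (forall v, A v -> C v) -> conv A x -> C x.
Proof.
  intros hC hAC [l [hf [hw ->]]].
  assert (forall l, Forall (fun p => 0 <= fst p /\ A (snd p)) l -> 0 < weights l ->
     C (vscal (/ weights l) (wsum l))) as key.
  { clear l hf hw. induction l as [|p l IH]; simpl; intros hf hpos; [lra|].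
    inversion hf; subst. destruct H1 as [hp hA].
    pose proof (weights_nonneg _ _ H2) as hn.
    destruct (Req_dec (weights l) 0) as [h0|h0].
    - rewrite (weights0 _ _ H2 h0), h0. rewrite h0 in hpos.
      replace (vscal (/ (fst p + 0)) (vadd (vscal (fst p) (snd p)) vzero)) with (snd p).
      + apply hAC; auto.
      + vext. field. lra.
    - specialize (IH H2 ltac:(lra)).
      set (s := fst p + weights l) in *.
      replace (vscal (/ s) (vadd (vscal (fst p) (snd p)) (wsum l))) with
        (vadd (vscal (fst p / s) (snd p)) (vscal (1 - fst p / s) (vscal (/ weights l) (wsum l)))).
      + apply hC; auto. split.
        * unfold Rdiv; apply Rmult_le_pos; [lra| apply Rlt_le, Rinv_0_lt_compat; lra].
        * unfold s. apply Rmult_le_reg_r with (fst p + weights l); [lra|].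
          unfold Rdiv. rewrite Rmult_assoc, Rinv_l by lra. lra.
      + vext. unfold s. field. split; lra. }
  specialize (key l hf ltac:(lra)). rewrite hw, Rinv_1, vscal_1 in key. auto.
Qed.

Record bprops (B : (vec -> Prop) -> Prop) : Prop := {
  bp_ne : exists V, B V;
  bp_fsupp : forall V x, B V -> V x -> fsupp x;
  bp_zero : forall V, B V -> V vzero;
  bp_int : forall V1 V2, B V1 -> B V2 -> exists V3, B V3 /\ forall x, V3 x -> V1 x /\ V2 x;
  bp_half : forall V, B V -> exists V', B V' /\ forall u v, V' u -> V' v -> V (vadd u v);
  bp_scale : forall V M, B V -> 0 < M -> exists V', B V' /\ forall s u, Rabs s <= M -> V' u -> V (vscal s u);
  bp_abs : forall V x, B V -> fsupp x -> exists d, 0 < d /\ forall r, Rabs r < d -> V (vscal r x);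
  bp_e : forall V, B V -> exists N, forall n, (N < n)%nat -> V (e n)
}.

Definition tauB (B : (vec -> Prop) -> Prop) (U : vec -> Prop) : Prop :=
  (forall x, U x -> fsupp x) /\ forall x, U x -> exists V, B V /\ forall v, V v -> U (vadd x v).

Section Gen.
Variable B : (vec -> Prop) -> Prop.
Hypothesis hB : bprops B.

Lemma tauB_top : topology (tauB B).
Proof.
  split; [|split; [|split; [|split]]].
  - intros U [h _]; auto.
  - split; intros x [].
  - split; auto. intros x hx. destruct (bp_ne _ hB) as [V hV]. exists V. split; auto.
    intros v hv. apply fsupp_vadd; auto. eapply bp_fsupp; eauto.
  - intros F hF. split.
    + intros x [U [hU hx]]. destruct (hF U hU) as [h _]; auto.
    + intros x [U [hU hx]]. destruct (hF U hU) as [_ h]. destruct (h x hx) as [V [hV hV']].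
      exists V; split; auto. intros v hv. exists U; auto.
  - intros U V [hU1 hU2] [hV1 hV2]. split.
    + intros x [h _]; auto.
    + intros x [hx1 hx2]. destruct (hU2 x hx1) as [V1 [b1 h1]]. destruct (hV2 x hx2) as [V2 [b2 h2]].
      destruct (bp_int _ hB V1 V2 b1 b2) as [V3 [b3 h3]]. exists V3; split; auto.
      intros v hv; destruct (h3 v hv); split; auto.
Qed.

Lemma nbhd_of_B V W x : B V -> fsupp x -> (forall v, V v -> W (vadd x v)) -> nbhd (tauB B) W x.
Proof.
  intros hV hx hW.
  exists (fun z => fsupp z /\ exists V', B V' /\ forall v, V' v -> W (vadd z v)). split; [|split].
  - split; [intros z [h _]; auto|].
    intros z [hz [V' [b' h']]]. destruct (bp_half _ hB V' b') as [V'' [b'' h'']].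
    exists V''. split; auto. intros v hv. split.
    + apply fsupp_vadd; auto. eapply bp_fsupp; eauto.
    + exists V''. split; auto. intros w hw. rewrite vadd_assoc. apply h'. apply h''; auto.
  - split; auto. exists V; auto.
  - intros z [_ [V' [b' h']]]. rewrite <- (vadd_0_r z). apply h'. apply (bp_zero _ hB); auto.
Qed.

Lemma nbhd_to_B W x : nbhd (tauB B) W x -> exists V, B V /\ forall v, V v -> W (vadd x v).
Proof.
  intros [O [[_ hO] [hx hOW]]]. destruct (hO x hx) as [V [bV hV]]. exists V; split; auto.
Qed.

Lemma nbhd_fsupp tau W x : topology tau -> nbhd tau W x -> fsupp x.
Proof. intros [h _] [O [hO [hx _]]]. eapply h; eauto. Qed.

Lemma tauB_vector : vector_topology (tauB B).
Proof.
  split; [apply tauB_top| split].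
  - intros x y hx hy W hW. destruct (nbhd_to_B _ _ hW) as [V [bV hV]].
    destruct (bp_half _ hB V bV) as [V' [b' h']].
    exists (fun u => exists v, V' v /\ u = vadd x v), (fun u => exists v, V' v /\ u = vadd y v).
    split; [|split].
    + eapply nbhd_of_B; eauto.
    + eapply nbhd_of_B; eauto.
    + intros u w [v [hv ->]] [v' [hv' ->]].
      replace (vadd (vadd x v) (vadd y v')) with (vadd (vadd x y) (vadd v v')) by vext.
      apply hV, h'; auto.
  - intros t x hx W hW. destruct (nbhd_to_B _ _ hW) as [V [bV hV]].
    destruct (bp_half _ hB V bV) as [V' [b' h']].
    destruct (bp_abs _ hB V' x b' hx) as [d0 [hd0 Hd0]].
    assert (hM : 0 < Rabs t + 1) by (pose proof (Rabs_pos t); lra).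
    destruct (bp_scale _ hB V' (Rabs t + 1) b' hM) as [V'' [b'' h'']].
    exists (Rmin d0 1), (fun u => exists v, V'' v /\ u = vadd x v). split; [|split].
    + apply Rmin_glb_lt; lra.
    + eapply nbhd_of_B; eauto.
    + intros s u hs [v [hv ->]].
      replace (vscal s (vadd x v)) with (vadd (vscal t x) (vadd (vscal (s - t) x) (vscal s v))) by vext.
      apply hV, h'.
      * apply Hd0. apply Rlt_le_trans with (1 := hs), Rmin_l.
      * apply h''; auto. assert (Rabs (s - t) < 1) by (apply Rlt_le_trans with (1 := hs), Rmin_r).
        replace s with (t + (s - t)) by ring. eapply Rle_trans; [apply Rabs_triang| lra].
Qed.

Lemma tauB_e : e_to_zero (tauB B).
Proof.
  intros U hU. destruct (nbhd_to_B _ _ hU) as [V [bV hV]]. destruct (bp_e _ hB V bV) as [N hN].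
  exists N. intros n hn. rewrite <- (vadd_0_l (e n)). apply hV, hN; auto.
Qed.

Lemma tauB_lc : (forall V, B V -> convex V) -> locally_convex (tauB B).
Proof.
  intros hc. split; [apply tauB_vector|]. intros U hU. destruct (nbhd_to_B _ _ hU) as [V [bV hV]].
  exists V. split; [|split].
  - apply nbhd_of_B with V; auto. apply fsupp_vzero. intros v hv; rewrite vadd_0_l; auto.
  - apply hc; auto.
  - intros x hx. rewrite <- (vadd_0_l x). apply hV; auto.
Qed.

Lemma B_nbhd V : B V -> nbhd (tauB B) V vzero.
Proof. intros bV. apply nbhd_of_B with V; auto. apply fsupp_vzero. intros v hv; rewrite vadd_0_l; auto. Qed.

End Gen.

Lemma min_seq_good as1 as2 : good as1 -> good as2 -> good (fun k n => Rmin (as1 k n) (as2 k n)).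
Proof. intros g1 g2 k. apply in_A_min; auto. Qed.

Lemma div_seq_good as_ M : good as_ -> 0 < M -> good (fun k n => as_ k n / M).
Proof. intros g hM k. apply in_A_div; auto. Qed.

Lemma div_bound as_ M s : good as_ -> 0 < M -> Rabs s <= M ->
  forall i n, (1 <= n)%nat -> Rabs s * (as_ i n / M) <= as_ i n.
Proof.
  intros g hM hs i n hn. pose proof (proj1 (g i) n hn).
  apply Rle_trans with (M * (as_ i n / M)).
  - apply Rmult_le_compat_r; auto. unfold Rdiv. apply Rmult_le_pos; [lra| apply Rlt_le, Rinv_0_lt_compat; lra].
  - right. field. lra.
Qed.

Lemma Ns_props : bprops Ns.
Proof.
  constructor.
  - destruct good_exists as [as_ g]. exists (Useq as_), as_. split; auto; tauto.
  - intros V x [as_ [g h]] hx. apply h in hx. eapply Useq_fsupp; eauto.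
  - intros V [as_ [g h]]. apply h, Useq_0; auto.
  - intros V1 V2 [as1 [g1 h1]] [as2 [g2 h2]].
    exists (Useq (fun k n => Rmin (as1 k n) (as2 k n))). split.
    + exists (fun k n => Rmin (as1 k n) (as2 k n)). split; [apply min_seq_good; auto| tauto].
    + intros x hx. split; [apply h1| apply h2]; (eapply Useq_mono; [| |exact hx]); auto;
      intros; [apply Rmin_l| apply Rmin_r].
  - intros V [as_ [g h]]. destruct (Useq_half as_ g) as [bs [gb hb]].
    exists (Useq bs). split; [exists bs; split; auto; tauto|]. intros u v hu hv. apply h, hb; auto.
  - intros V M [as_ [g h]] hM. exists (Useq (fun k n => as_ k n / M)). split.
    + exists (fun k n => as_ k n / M). split; [apply div_seq_good; auto| tauto].
    + intros s u hs hu. apply h. eapply Useq_scale; [exact g| |exact hu]. apply div_bound; auto.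
  - intros V x [as_ [g h]] hx. destruct (Useq_absorb as_ g x hx) as [d [hd Hd]].
    exists d; split; auto. intros r hr; apply h, Hd; auto.
  - intros V [as_ [g h]]. destruct (Useq_e as_ g) as [N hN]. exists N. intros; apply h, hN; auto.
Qed.

Definition B2 (V : vec -> Prop) : Prop :=
  exists as_, good as_ /\ forall x, V x <-> conv (Useq as_) x.

Lemma B2_props : bprops B2.
Proof.
  constructor.
  - destruct good_exists as [as_ g]. exists (conv (Useq as_)), as_. split; auto; tauto.
  - intros V x [as_ [g h]] hx. apply h in hx. eapply conv_fsupp; [|exact hx]. intros; eapply Useq_fsupp; eauto.
  - intros V [as_ [g h]]. apply h, conv_incl, Useq_0; auto.
  - intros V1 V2 [as1 [g1 h1]] [as2 [g2 h2]].
    exists (conv (Useq (fun k n => Rmin (as1 k n) (as2 k n)))). split.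
    + exists (fun k n => Rmin (as1 k n) (as2 k n)). split; [apply min_seq_good; auto| tauto].
    + intros x hx. split; [apply h1| apply h2]; (eapply conv_mono; [|exact hx]); intros v hv;
      (eapply Useq_mono; [| |exact hv]); auto; intros; [apply Rmin_l| apply Rmin_r].
  - intros V [as_ [g h]]. set (cs := fun k n => as_ k n / 2).
    assert (gc : good cs) by (apply div_seq_good; auto; lra).
    exists (conv (Useq cs)). split; [exists cs; split; auto; tauto|].
    intros u v hu hv. apply h.
    replace (vadd u v) with (vscal 2 (vadd (vscal (1/2) u) (vscal (1 - 1/2) v))) by (vext; field).
    eapply conv_scale; [| apply conv_convex; [exact hu| exact hv| lra]].
    intros w hw. eapply Useq_scale; [exact g| |exact hw]. apply div_bound; auto; try lra.
    rewrite Rabs_right; lra.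
  - intros V M [as_ [g h]] hM. exists (conv (Useq (fun k n => as_ k n / M))). split.
    + exists (fun k n => as_ k n / M). split; [apply div_seq_good; auto| tauto].
    + intros s u hs hu. apply h. eapply conv_scale; [|exact hu].
      intros w hw. eapply Useq_scale; [exact g| |exact hw]. apply div_bound; auto.
  - intros V x [as_ [g h]] hx. destruct (Useq_absorb as_ g x hx) as [d [hd Hd]].
    exists d; split; auto. intros r hr; apply h, conv_incl, Hd; auto.
  - intros V [as_ [g h]]. destruct (Useq_e as_ g) as [N hN]. exists N. intros; apply h, conv_incl, hN; auto.
Qed.

Lemma B2_convex V : B2 V -> convex V.
Proof.
  intros [as_ [g h]] x y t hx hy ht. apply h. apply h in hx; apply h in hy. apply conv_convex; auto.
Qed.

Fixpoint bb (g : nat -> nat) (n j : nat) : R :=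
  match j with
  | O => 0
  | S j' => if Nat.ltb (g j') n then Rmax (INR j) (bb g n j') else bb g n j'
  end.

Lemma bb_prop1 g n j t : Rabs t < bb g n j -> exists i, (g i < n)%nat /\ Rabs t <= INR i + 1.
Proof.
  induction j; cbn [bb]; intros h.
  - pose proof (Rabs_pos t); lra.
  - destruct (Nat.ltb_spec (g j) n).
    + unfold Rmax in h. destruct (Rle_dec (INR (S j)) (bb g n j)); auto.
      exists j. split; auto. rewrite S_INR in h; lra.
    + auto.
Qed.

Lemma bb_prop2 g n j i : (i < j)%nat -> (g i < n)%nat -> INR i + 1 <= bb g n j.
Proof.
  induction j; intros hij hg; [lia|]. cbn [bb].
  destruct (Nat.ltb_spec (g j) n).
  - destruct (Nat.eq_dec i j) as [->|hne].
    + rewrite <- S_INR. apply Rmax_l.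
    + eapply Rle_trans; [apply IHj; [lia| auto]| apply Rmax_r].
  - destruct (Nat.eq_dec i j) as [->|hne]; [lia|]. apply IHj; [lia| auto].
Qed.

Fixpoint iterS (f : (vec -> Prop) -> (vec -> Prop)) (W : vec -> Prop) (k : nat) : vec -> Prop :=
  match k with O => W | S k => f (iterS f W k) end.

Section Fine.
Variable tau : (vec -> Prop) -> Prop.
Hypothesis hv : vector_topology tau.
Hypothesis he : e_to_zero tau.

Lemma nbhd_pt W x : nbhd tau W x -> W x.
Proof. intros [O [_ [h1 h2]]]; auto. Qed.

Lemma nbhd_inter U V x : nbhd tau U x -> nbhd tau V x -> nbhd tau (fun y => U y /\ V y) x.
Proof.
  destruct hv as [[_ [_ [_ [_ hI]]]] _].
  intros [O1 [o1 [x1 s1]]] [O2 [o2 [x2 s2]]]. exists (fun y => O1 y /\ O2 y).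
  split; [apply hI; auto| split; [auto| intros y [a b]; split; auto]].
Qed.

Lemma F2 W : nbhd tau W vzero -> exists W', nbhd tau W' vzero /\ forall u v, W' u -> W' v -> W (vadd u v).
Proof.
  intros hW. destruct hv as [_ [hadd _]].
  rewrite <- (vadd_0_l vzero) in hW.
  destruct (hadd vzero vzero fsupp_vzero fsupp_vzero W hW) as [U [V [hU [hV h]]]].
  exists (fun y => U y /\ V y). split; [apply nbhd_inter; auto|].
  intros u v [a _] [_ b]; auto.
Qed.

Lemma F3 W c : nbhd tau W vzero -> exists W', nbhd tau W' vzero /\ forall u, W' u -> W (vscal c u).
Proof.
  intros hW. destruct hv as [_ [_ hs]]. rewrite <- (vscal_vzero c) in hW.
  destruct (hs c vzero fsupp_vzero W hW) as [d [U [hd [hU h]]]].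
  exists U; split; auto. intros u hu. apply h; auto. rewrite Rminus_diag, Rabs_R0; auto.
Qed.

Lemma F4 W : nbhd tau W vzero -> exists d U, 0 < d /\ nbhd tau U vzero /\
  forall s u, Rabs s < d -> U u -> W (vscal s u).
Proof.
  intros hW. destruct hv as [_ [_ hs]]. rewrite <- (vscal_vzero 0) in hW.
  destruct (hs 0 vzero fsupp_vzero W hW) as [d [U [hd [hU h]]]].
  exists d, U. split; auto. split; auto. intros s u hsd hu. apply h; auto. rewrite Rminus_0_r; auto.
Qed.

Lemma F5 W n : nbhd tau W vzero -> (1 <= n)%nat -> exists d, 0 < d /\ forall s, Rabs s < d -> W (vscal s (e n)).
Proof.
  intros hW hn. destruct hv as [_ [_ hs]]. rewrite <- (vscal_0 (e n)) in hW.
  destruct (hs 0 (e n) (fsupp_e n hn) W hW) as [d [U [hd [hU h]]]].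
  exists d. split; auto. intros s hsd. apply h; [rewrite Rminus_0_r; auto| apply nbhd_pt; auto].
Qed.

Lemma F6 W M : nbhd tau W vzero -> 0 < M -> exists N, forall n t, (N < n)%nat -> Rabs t <= M -> W (vscal t (e n)).
Proof.
  intros hW hM. destruct (F4 W hW) as [d [U [hd [hU h]]]].
  set (c := 2 * M / d). assert (hc : 0 < c) by (unfold c; apply Rdiv_lt_0_compat; lra).
  destruct (F3 U c hU) as [W' [hW' h']]. destruct (he W' hW') as [N hN].
  exists N. intros n t hn ht.
  replace (vscal t (e n)) with (vscal (t / c) (vscal c (e n))) by (vext; field; lra).
  apply h; [|apply h'; auto].
  unfold Rdiv. rewrite Rabs_mult, Rabs_inv, (Rabs_right c) by lra.
  unfold c. replace (/ (2 * M / d)) with (d / (2 * M)) by (field; lra).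
  apply Rle_lt_trans with (M * (d / (2 * M))).
  - apply Rmult_le_compat_r; auto. unfold Rdiv; apply Rmult_le_pos; [lra| apply Rlt_le, Rinv_0_lt_compat; lra].
  - replace (M * (d / (2 * M))) with (d / 2) by (field; lra). lra.
Qed.

Lemma F7 W : nbhd tau W vzero -> exists a, in_A a /\ forall n t, (1 <= n)%nat -> Rabs t < a n -> W (vscal t (e n)).
Proof.
  intros hW.
  assert (Hg : forall j, exists N, forall n t, (N < n)%nat -> Rabs t <= INR j + 1 -> W (vscal t (e n))).
  { intro j. apply F6; auto. pose proof (pos_INR j); lra. }
  set (g := fun j => proj1_sig (constructive_indefinite_description _ (Hg j))).
  assert (hg : forall j n t, (g j < n)%nat -> Rabs t <= INR j + 1 -> W (vscal t (e n))).
  { intros j. unfold g. destruct (constructive_indefinite_description _ (Hg j)); simpl; auto. }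
  assert (Hr : forall n, exists d, (1 <= n)%nat -> 0 < d /\ forall s, Rabs s < d -> W (vscal s (e n))).
  { intro n. destruct (Compare_dec.le_lt_dec 1 n).
    - destruct (F5 W n hW l) as [d hd]. exists d; auto.
    - exists 1. intros; lia. }
  set (r := fun n => proj1_sig (constructive_indefinite_description _ (Hr n))).
  assert (hr : forall n, (1 <= n)%nat -> 0 < r n /\ forall s, Rabs s < r n -> W (vscal s (e n))).
  { intros n. unfold r. destruct (constructive_indefinite_description _ (Hr n)); simpl; auto. }
  exists (fun n => Rmax (r n) (bb g n n)). split; [split|].
  - intros n hn. eapply Rlt_le_trans; [apply (hr n hn)| apply Rmax_l].
  - intro M. destruct (INR_unbounded M) as [J hJ]. exists (S (Nat.max (g J) J)).
    intros n hn. eapply Rlt_le_trans; [|apply Rmax_r].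
    eapply Rlt_le_trans; [|apply (bb_prop2 g n n J); lia]. lra.
  - intros n t hn ht. unfold Rmax in ht. destruct (Rle_dec (r n) (bb g n n)).
    + destruct (bb_prop1 _ _ _ _ ht) as [i [hi1 hi2]]. eapply hg; eauto.
    + apply (hr n hn); auto.
Qed.

Lemma fine_dir W : nbhd tau W vzero -> exists as_, good as_ /\ forall x, Useq as_ x -> W x.
Proof.
  intros hW.
  assert (Hf : forall V, exists V', nbhd tau V vzero ->
     nbhd tau V' vzero /\ forall u v, V' u -> V' v -> V (vadd u v)).
  { intro V. destruct (classic (nbhd tau V vzero)) as [h|h].
    - destruct (F2 V h) as [V' hV']. exists V'; auto.
    - exists V; intros; contradiction. }
  set (f := fun V => proj1_sig (constructive_indefinite_description _ (Hf V))).
  assert (hf : forall V, nbhd tau V vzero -> nbhd tau (f V) vzero /\ forall u v, f V u -> f V v -> V (vadd u v)).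
  { intros V. unfold f. destruct (constructive_indefinite_description _ (Hf V)); simpl; auto. }
  set (Vs := iterS f W).
  assert (hVs : forall k, nbhd tau (Vs k) vzero).
  { induction k; simpl; auto. apply hf; auto. }
  assert (hHalf : forall k u v, Vs (S k) u -> Vs (S k) v -> Vs k (vadd u v)).
  { intros k. apply (hf (Vs k) (hVs k)). }
  set (as_ := fun k => proj1_sig (constructive_indefinite_description _ (F7 (Vs (S k)) (hVs (S k))))).
  assert (has : forall k, in_A (as_ k) /\ forall n t, (1 <= n)%nat -> Rabs t < as_ k n -> Vs (S k) (vscal t (e n))).
  { intros k. unfold as_. destruct (constructive_indefinite_description _ (F7 (Vs (S k)) (hVs (S k)))); simpl; auto. }
  assert (hSa : forall k z, Sa (as_ k) z -> Vs (S k) z).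
  { intros k z [n [t [hn [ht ->]]]]. apply has; auto. }
  exists as_. split; [intro k; apply has|].
  assert (claim : forall k y, Ssum as_ k y -> forall w, Vs (S k) w -> W (vadd y w)).
  { induction k; simpl; intros y hy w hw.
    - apply (hHalf O); auto.
    - destruct hy as [y1 [s [hy1 [hs ->]]]]. rewrite vadd_assoc. apply IHk; [exact hy1|].
      apply hHalf; auto. }
  intros x [k hk]. rewrite <- (vadd_0_r x). apply (claim k); auto. apply nbhd_pt; auto.
Qed.

End Fine.

Lemma lincomb_conv (A : vec -> Prop) lam a m t : (1 <= t)%nat ->
  (forall i, (1 <= i)%nat -> (i <= t)%nat -> A (vscal (INR t * lam i * a) (e (m i)))) ->
  conv A (lincomb lam a m t).
Proof.
  intros ht hA. assert (hT : 0 < INR t) by (apply lt_0_INR; lia).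
  assert (forall k, (k <= t)%nat -> exists l, Forall (fun p => 0 <= fst p /\ A (snd p)) l /\
     weights l = INR k / INR t /\ wsum l = lincomb lam a m k) as key.
  { induction k; intros hk.
    - exists nil. simpl. split; [constructor| split; [unfold Rdiv; ring| reflexivity]].
    - destruct (IHk ltac:(lia)) as [l [h1 [h2 h3]]].
      exists (l ++ (/ INR t, vscal (INR t * lam (S k) * a) (e (m (S k)))) :: nil). split; [|split].
      + apply Forall_app; split; auto. constructor; [|constructor]. simpl. split.
        * apply Rlt_le, Rinv_0_lt_compat; auto.
        * apply hA; lia.
      + rewrite weights_app, h2, S_INR. simpl. field. lra.
      + rewrite wsum_app, h3. simpl. vext. field. lra. }
  destruct (key t (le_n t)) as [l [h1 [h2 h3]]]. exists l. split; auto. split; auto.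
  rewrite h2. field. lra.
Qed.

Theorem proposition2p1 (mu nu : (vec -> Prop) -> Prop) :
  is_mu mu -> is_nu nu ->
  base_at0 mu Ns /\
  base_at0 nu (fun W => exists V, Ns V /\ (forall x, W x <-> conv V x)) /\
  (forall U, nbhd nu U vzero ->
   forall t : nat, (1 <= t)%nat -> forall a : R, 0 < a ->
   exists q : nat, (1 <= q)%nat /\
     forall (m : nat -> nat) (lam : nat -> R),
       (q < m 1%nat)%nat ->
       (forall i, (1 <= i)%nat -> (i < t)%nat -> (m i < m (S i))%nat) ->
       (forall i, (1 <= i)%nat -> (i <= t)%nat -> -1 <= lam i <= 1) ->
       U (lincomb lam a m t)).
Proof.
  intros [vmu [emu fmu]] [lnu [enu fnu]].
  assert (nuc : forall W, nbhd nu W vzero -> exists as_, good as_ /\ forall x, conv (Useq as_) x -> W x).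
  { intros W hW. destruct lnu as [vnu cnu]. destruct (cnu W hW) as [C [hC [cC sC]]].
    destruct (fine_dir nu vnu enu C hC) as [as_ [g h]]. exists as_. split; auto.
    intros x hx. apply sC. eapply convex_conv_sub; eauto. }
  split; [split|split; [split|]].
  - intros V hV. destruct (B_nbhd Ns Ns_props V hV) as [O [hO [h1 h2]]].
    exists O. split; [|split; auto]. apply (fmu (tauB Ns)); auto.
    + apply tauB_vector, Ns_props.
    + apply tauB_e, Ns_props.
  - intros W hW. destruct (fine_dir mu vmu emu W hW) as [as_ [g h]].
    exists (Useq as_). split; auto. exists as_. split; auto; tauto.
  - intros W [V [[as_ [g hV]] hW]].
    assert (bW : B2 W).
    { exists as_. split; auto. intro x. rewrite hW. split; apply conv_mono; intro v; apply hV. }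
    destruct (B_nbhd B2 B2_props W bW) as [O [hO [h1 h2]]].
    exists O. split; [|split; auto]. apply (fnu (tauB B2)); auto.
    + apply tauB_lc; [apply B2_props| apply B2_convex].
    + apply tauB_e, B2_props.
  - intros W hW. destruct (nuc W hW) as [as_ [g h]].
    exists (conv (Useq as_)). split; auto. exists (Useq as_). split; [|tauto]. exists as_; split; auto; tauto.
  - intros U hU t ht a ha. destruct (nuc U hU) as [as_ [g h]].
    destruct (proj2 (g O) (INR t * a)) as [N hN].
    exists (S N). split; [lia|]. intros m lam hm1 hinc hlam.
    apply h. apply lincomb_conv; auto.
    assert (hmi : forall i, (1 <= i)%nat -> (i <= t)%nat -> (S N < m i)%nat).
    { induction i; intros h1 h2; [lia|]. destruct (Nat.eq_dec i O) as [->|hne]; auto.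
      specialize (IHi ltac:(lia) ltac:(lia)). specialize (hinc i ltac:(lia) ltac:(lia)). lia. }
    intros i h1 h2. exists O. simpl. exists (m i), (INR t * lam i * a).
    specialize (hmi i h1 h2). split; [lia| split; auto].
    apply Rle_lt_trans with (INR t * a); [|apply hN; lia].
    pose proof (hlam i h1 h2). assert (0 < INR t) by (apply lt_0_INR; lia).
    assert (0 < INR t * a) by (apply Rmult_lt_0_compat; auto). replace (INR t * lam i * a) with (lam i * (INR t * a)) by ring. apply Rabs_le. split; nra.
Qed.
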